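(* Let $F\neq\mathbb{RP}^2$ be a surface, $D$ a link diagram in $F$ with ordered crossings, and $\bar D$ its mirror image (all crossings switched), with crossings ordered consistently: if $v$ is the $i$-th crossing of $D$ then the corresponding crossing $\bar v$ is the $i$-th crossing of $\bar D$. Let $\varphi:C_{ijs}(D)\to C_{-i,-j,-s}(\bar D)$ send an enhanced state $S$ of $D$ to the enhanced state $\varphi(S)$ of $\bar D$ in which each crossing $\bar v$ receives the marker opposite to the marker of $v$ in $S$ (so that the circles of $S$ and $\varphi(S)$ are naturally identified) and every circle receives the label opposite to its label in $S$. Then $\varphi\circ\tilde d=d^+\circ\varphi$ as maps $C_{ijs}(D)\to C_{-i-2,-j,-s}(\bar D)$, where $\tilde d(S)=\sum_{S'}\sum_v(-1)^{t(S,v)}[S':S]_vS'$ (sum over enhanced states $S'$ of $D$ and crossings $v$ of $D$) and $d^+$ on $C(\bar D)$ is $d^+(T)=\sum_{w}(-1)^{t^+(T,w)}d_w(T)$.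
   Context: A link diagram in $F$ is a finite collection of generically immersed closed curves with finitely many crossings with over/under information. The $(+1)$-/$(-1)$-smoothing of a crossing is the one with coefficient $A$/$A^{-1}$ in $L_p=AL_0+A^{-1}L_\infty$. An enhanced state assigns markers $\pm1$ to crossings and labels $\pm$ to the resulting circles. A circle is trivial if it bounds a disk in $F$, bounding if it bounds a disk or a Möbius band; $\mathcal C(F)$ = unoriented unbounding simple closed curves in $F$ up to homotopy. $I(S)=\#\{+1\}-\#\{-1\}$ markers, $\tau(S)=\#$(trivial circles labeled $+$)$-\#$(trivial labeled $-$), $J=I+2\tau$, $\Psi(S)=\sum\varepsilon_k\gamma_k\in\mathbb Z\mathcal C(F)$ over unbounding circles with labels $\varepsilon_k$. $C_{ijs}(D)$ is free abelian on enhanced states with $(I,J,\Psi)=(i,j,s)$. $[S:S']_v=1$ iff (a) $v$ has marker $+1$ in $S$ and $-1$ in $S'$, (b) other markers agree, (c) circles common to $S,S'$ have equal labels, (d) $J(S)=J(S')$, $\Psi(S)=\Psi(S')$; else $0$. $d_v(S)=\sum_{S'}[S:S']_vS'$; $t(S,v)$ (resp. $t^+(S,v)$) = number of $-1$ (resp. $+1$) markers of $S$ at crossings greater than $v$. *)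

(* Defs.v *)
From HB Require Import structures.
From mathcomp Require Import all_boot all_order all_algebra.
Set Implicit Arguments. Unset Strict Implicit. Unset Printing Implicit Defensive.
Import Order.TTheory GRing.Theory Num.Theory.
Local Open Scope ring_scope.

(* Geometric type of a simple closed curve in F: bounds a disk (trivial),
   bounds a Moebius band but no disk, or unbounding with its (unoriented)
   homotopy class in C(F). *)
Inductive ckind (Cls : Type) := Trivial | Moebius | Unbounding of Cls.
Arguments Trivial {Cls}. Arguments Moebius {Cls}.

(* A link diagram in F with crossings ordered as 'I_ncross.
   - Curve : the finitely many simple closed curves of F that occur as
     circles of some smoothing of the diagram (identified as curves);
   - kind  : their topological type in F (depends only on the curve);
   - circles g : the set of circles obtained by smoothing crossing v in the
     geometric way g v (the two local smoothings at each crossing being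
     labelled false/true independently of over/under information);
   - over v : which geometric smoothing at v is the A-smoothing (the
     (+1)-smoothing); this is where the over/under information enters. *)
Record diagram := Diagram {
  ncross : nat;
  Curve : finType;
  Cls : eqType;
  kind : Curve -> ckind Cls;
  circles : {ffun 'I_ncross -> bool} -> {set Curve};
  over : 'I_ncross -> bool }.

(* Mirror image: every crossing switched, crossings kept in the same order;
   switching a crossing exchanges its A- and B-smoothings. *)
Definition mirror (D : diagram) : diagram :=
  @Diagram (ncross D) (Curve D) (Cls D) (@kind D) (@circles D)
           (fun v => ~~ @over D v).

(* An enhanced state: markers (true = +1, false = -1) and labels
   (true = +, false = -) of curves; labels of curves which are not circles
   of the state are required to be false (canonical representative). *)
Definition estate (D : diagram) : finType :=
  ({ffun 'I_(ncross D) -> bool} * {ffun Curve D -> bool})%type.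

Section States.
Variable D : diagram.
Implicit Types S T : estate D.

Definition geo (m : {ffun 'I_(ncross D) -> bool}) : {ffun 'I_(ncross D) -> bool} :=
  [ffun v => m v == over v].

Definition circ S : {set Curve D} := circles (geo S.1).

Definition valid S : bool := [forall c, (c \notin circ S) ==> ~~ S.2 c].

Definition sgn (b : bool) : int := if b then 1 else -1.

Definition Iidx S : int := \sum_(v < ncross D) sgn (S.1 v).

Definition is_trivial (c : Curve D) : bool :=
  if kind c is Trivial then true else false.

Definition has_class (g : Cls D) (c : Curve D) : bool :=
  if kind c is Unbounding g' then g' == g else false.

Definition tau S : int := \sum_(c in circ S | is_trivial c) sgn (S.2 c).

Definition Jidx S : int := Iidx S + 2 * tau S.

(* Psi(S) in Z C(F), as the function giving the coefficient of each class *)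
Definition Psi S (g : Cls D) : int :=
  \sum_(c in circ S | has_class g c) sgn (S.2 c).

(* Psi S = Psi T as elements of Z C(F); both vanish outside the classes
   of curves, so it suffices to compare at those. *)
Definition Psi_eq S T : bool :=
  [forall c, if kind c is Unbounding g then Psi S g == Psi T g else true].

Definition incid (v : 'I_(ncross D)) S S' : bool :=
  [&& valid S, valid S', S.1 v, ~~ S'.1 v,
      [forall w, (w != v) ==> (S.1 w == S'.1 w)],
      [forall c, ((c \in circ S) && (c \in circ S')) ==> (S.2 c == S'.2 c)],
      Jidx S == Jidx S' & Psi_eq S S'].

Definition t_minus S (v : 'I_(ncross D)) : nat := #|[set w : 'I_(ncross D) | (v < w)%N & ~~ S.1 w]|.
Definition t_plus S (v : 'I_(ncross D)) : nat := #|[set w : 'I_(ncross D) | (v < w)%N & S.1 w]|.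

Definition chain := {ffun estate D -> int}.

Definition b2z (b : bool) : int := if b then 1 else 0.

Definition dv (v : 'I_(ncross D)) S : chain := [ffun S' => b2z (incid v S S')].

Definition dplus S : chain :=
  [ffun S' => \sum_(v < ncross D) (-1) ^+ t_plus S v * dv v S S'].

Definition dtilde S : chain :=
  [ffun S' => \sum_(v < ncross D) (-1) ^+ t_minus S v * b2z (incid v S' S)].

End States.

Definition phiS (D : diagram) (S : estate D) : estate (mirror D) :=
  ([ffun v => ~~ S.1 v], [ffun c => (c \in circ S) && ~~ S.2 c]).

Definition phiL (D : diagram) (x : chain D) : chain (mirror D) :=
  [ffun T => \sum_(S : estate D | valid S && (phiS S == T)) x S].

(* Main.v *)
Require Import Defs.
From HB Require Import structures.
From mathcomp Require Import all_boot all_order all_algebra.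
Import Order.TTheory GRing.Theory Num.Theory.
Local Open Scope ring_scope.

Set Implicit Arguments.
Section Proof.
Variable D : diagram.

Lemma geo_phi (S : estate D) : geo (phiS S).1 = geo S.1.
Proof. by apply/ffunP=> v; rewrite !ffunE /= (inj_eq negb_inj). Qed.

Lemma circ_phi (S : estate D) : circ (phiS S) = circ S :> {set Curve D}.
Proof. by rewrite /circ geo_phi. Qed.

Lemma circ_phi2 (S : estate D) :
  circles (d:=D) (geo (D:=mirror D) [ffun v => ~~ S.1 v]) = circ S.
Proof. exact: circ_phi. Qed.

Lemma valid_phi (S : estate D) : valid (phiS S).
Proof.
apply/forallP=> c; apply/implyP; rewrite circ_phi /= ffunE => /negbTE ->; done.
Qed.

Lemma sgnN b : sgn (~~ b) = - sgn b.
Proof. by case: b. Qed.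

Lemma Iidx_phi (S : estate D) : Iidx (phiS S) = - Iidx S.
Proof.
rewrite /Iidx -sumrN; apply: eq_bigr => v _; by rewrite /= ffunE sgnN.
Qed.

Lemma tau_phi (S : estate D) : tau (phiS S) = - tau S.
Proof.
rewrite /tau circ_phi -sumrN; apply: eq_bigr => c /andP[cS _].
by rewrite /= ffunE cS sgnN.
Qed.

Lemma Jidx_phi (S : estate D) : Jidx (phiS S) = - Jidx S.
Proof. by rewrite /Jidx Iidx_phi tau_phi mulrN opprD. Qed.

Lemma Psi_phi (S : estate D) g : Psi (phiS S) g = - Psi S g.
Proof.
rewrite /Psi circ_phi -sumrN; apply: eq_bigr => c /andP[cS _].
by rewrite /= ffunE cS sgnN.
Qed.

Lemma t_plus_phi (S : estate D) v : t_plus (phiS S) v = t_minus S v.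
Proof.
by rewrite /t_plus /t_minus; apply: eq_card => w; rewrite !inE /= ffunE.
Qed.

Lemma phi1 (S : estate D) v : (phiS S).1 v = ~~ S.1 v.
Proof. by rewrite ffunE. Qed.

Lemma mark_comp v (S S' : estate D) :
  [forall w, (w != v) ==> ((phiS S).1 w == (phiS S').1 w)] =
  [forall w : 'I_(ncross D), (w != v) ==> (S'.1 w == S.1 w)].
Proof.
apply/forallP/forallP => H w; move: (H w); by rewrite !phi1; case: (S.1 w); case: (S'.1 w).
Qed.

Lemma circ_comp (S S' : estate D) :
  [forall c, ((c \in circ (phiS S)) && (c \in circ (phiS S'))) ==> ((phiS S).2 c == (phiS S').2 c)]
  = [forall c : Curve D, ((c \in circ S') && (c \in circ S)) ==> (S'.2 c == S.2 c)].
Proof.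
rewrite !circ_phi.
apply/forallP/forallP => H c; move: (H c); rewrite /= !ffunE andbC;
case: (c \in circ S) => //=; case: (c \in circ S') => //=;
by case: (S.2 c); case: (S'.2 c).
Qed.

Lemma psi_comp (S S' : estate D) :
  Psi_eq (D := mirror D) (phiS S) (phiS S') = Psi_eq (D := D) S' S.
Proof.
apply/forallP/forallP => H c; move: (H c); rewrite /=; case: (kind c) => // g;
by rewrite !Psi_phi eqr_opp eq_sym.
Qed.

Lemma incid_phi (v : 'I_(ncross D)) (S S' : estate D) : valid S -> valid S' ->
  incid (D := mirror D) v (phiS S) (phiS S') = incid (D := D) v S' S.
Proof.
move=> vS vS'; rewrite /incid !valid_phi vS vS' !Jidx_phi eqr_opp [Jidx S == _]eq_sym.
rewrite mark_comp circ_comp psi_comp !phi1 negbK.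
by case: (S.1 v); case: (S'.1 v).
Qed.

Definition psi (T : estate (mirror D)) : estate D :=
  ([ffun v => ~~ T.1 v], [ffun c => (c \in circ T) && ~~ T.2 c]).

Lemma circ_psi (T : estate (mirror D)) : circ (psi T) = circ T :> {set Curve D}.
Proof.
rewrite /circ; congr (circles _); apply/ffunP => v; rewrite !ffunE /=.
by case: (T.1 v); case: (Defs.over v).
Qed.

Lemma valid_psi (T : estate (mirror D)) : valid (psi T).
Proof.
apply/forallP=> c; apply/implyP; rewrite circ_psi /= ffunE => /negbTE ->; done.
Qed.

Lemma psiK (T : estate (mirror D)) : valid T -> phiS (psi T) = T.
Proof.
move=> /forallP vT; case: T vT => m l vT; congr (_, _); apply/ffunP => x; rewrite !ffunE.
  by rewrite ?ffunE negbK.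
rewrite circ_psi ?ffunE.
have := vT x; case: (x \in circ (m, l)) => /=; [by rewrite negbK | by move=> /negbTE ->].
Qed.

Lemma phi_inj (S1 S2 : estate D) : valid S1 -> valid S2 -> phiS S1 = phiS S2 -> S1 = S2.
Proof.
case: S1 => m1 l1; case: S2 => m2 l2 /forallP v1 /forallP v2 [E1 E2].
have Em : m1 = m2.
  apply/ffunP => x; move/ffunP: E1 => /(_ x); rewrite !ffunE.
  by case: (m1 x); case: (m2 x).
subst m2; congr (_, _); apply/ffunP => c; move/ffunP: E2 => /(_ c); rewrite !ffunE /=.
move: (v1 c) (v2 c); rewrite /circ /=.
case: (c \in circles (geo m1)) => /=.
- by case: (l1 c); case: (l2 c).
- by case: (l1 c); case: (l2 c).
Qed.

End Proof.
Theorem proposition9p3 (D : diagram) (S : estate D) :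
  valid S ->
  phiL (dtilde S) = dplus (phiS S) /\
  (forall T : estate (mirror D), dplus (phiS S) T != 0 ->
     [/\ Iidx T = - Iidx S - 2, Jidx T = - Jidx S &
         forall g : Cls D, Psi T g = - Psi S g]).
Proof.
move=> vS; split.
  apply/ffunP => T; rewrite !ffunE.
  case vT: (valid T).
    rewrite (big_pred1 (psi T)); last first.
      move=> S'; rewrite /=; apply/andP/eqP.
        case=> vS' /eqP E; apply: phi_inj => //; first exact: valid_psi.
        by rewrite E psiK.
      by move=> ->; split; [exact: valid_psi | rewrite psiK].
    rewrite ffunE; apply: eq_bigr => v _.
    by rewrite -{2}(@psiK _ T vT) ffunE (@incid_phi _ v S (psi T) vS (valid_psi T)) t_plus_phi.
  rewrite big_pred0; last first.
    move=> S'; apply/negP => /andP[_ /eqP E]; by rewrite -E valid_phi in vT.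
  rewrite big1 // => v _; rewrite ffunE /incid vT /=.
  by rewrite andbF mulr0.
move=> T.
case: (pickP (fun v => incid v (phiS S) T)) => [v Hv _ | H]; last first.
  rewrite ffunE big1 ?eqxx // => v _; by rewrite ffunE H mulr0.
case/andP: Hv => _ /andP[vT /andP[pv /andP[tv /andP[/forallP hw /andP[_ /andP[/eqP hJ hP]]]]]].
split.
- rewrite -Iidx_phi /Iidx (bigD1 v) //= [in RHS](bigD1 v) //=.
  rewrite (negbTE tv) pv.
  have -> : \sum_(i < ncross (mirror D) | i != v) sgn (T.1 i) =
            \sum_(i < ncross (mirror D) | i != v) sgn ((phiS S).1 i).
    apply: eq_bigr => w wv; move: (hw w); rewrite wv /= => /eqP ->; done.
  by rewrite /sgn /= addrC [in RHS]addrC -addrA.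
- by rewrite -hJ Jidx_phi.
- move=> g; case: (pickP (fun c : Curve D => has_class g c)) => [c hc | hn].
    move: hc; rewrite /has_class; case E: (kind c) => [||g'] // /eqP <-.
    move/forallP: hP => /(_ c) /=; rewrite E => /eqP <-; by rewrite Psi_phi.
  rewrite /Psi !big1 ?oppr0 // => c /andP[_].
    by have := hn c; rewrite /= => ->.
  by have := hn c; rewrite /= /has_class /= => ->.
Qed.
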